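(* Let $(X,d_X)$ be a complete metric space. Suppose that $U$ is a process on $X$ with pullback attractor $\mathfrak{A}=\{A(t)\}_{t\in\mathbb{R}}$ and that $S$ is a semigroup on $X$ with global attractor $\mathcal{A}$. Assume that (i) $\mathfrak{A}$ is forward bounded, i.e. there is a bounded set $B\subset X$ such that $\bigcup_{t\geq 0}A(t)\subset B$; (ii) for every $T>0$, $$\lim_{t\to\infty}\sup_{x\in B} d_X\big(U(t+T,t,x),S(T,x)\big)=0.$$ Then $\lim_{t\to\infty}\operatorname{dist}\big(A(t),\mathcal{A}\big)=0$.
   Context: A process on $X$ is a map $U:\{(t,\tau)\in\mathbb{R}^2:t\geq\tau\}\times X\to X$ with $U(\tau,\tau,x)=x$ and $U(t,s,U(s,\tau,x))=U(t,\tau,x)$ for all $t\geq s\geq\tau$, $x\in X$ (no continuity is assumed). A pullback attractor of $U$ is a family $\mathfrak{A}=\{A(t)\}_{t\in\mathbb{R}}$ of nonempty compact subsets of $X$ which is invariant ($U(t,\tau,A(\tau))=A(t)$ for all $t\geq\tau$), pullback attracts every nonempty bounded set $D\subset X$ (i.e. $\lim_{s\to\infty}\operatorname{dist}(U(t,t-s,D),A(t))=0$ for every $t\in\mathbb{R}$), and is minimal among families with these properties. A semigroup on $X$ is a map $S:[0,\infty)\times X\to X$ with $S(0,x)=x$ and $S(t+s,x)=S(t,S(s,x))$; its global attractor $\mathcal{A}$ is a nonempty compact set with $S(t,\mathcal{A})=\mathcal{A}$ for all $t\geq0$ that attracts every bounded set $D$: $\lim_{t\to\infty}\operatorname{dist}(S(t,D),\mathcal{A})=0$.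 Here $\operatorname{dist}(A,B)=\sup_{a\in A}\inf_{b\in B}d_X(a,b)$ is the Hausdorff semi-metric. *)

(* Defs.v *)
From HB Require Import structures.
From mathcomp Require Import all_boot all_order all_algebra.
From mathcomp Require Import all_classical all_reals all_analysis.
Set Implicit Arguments. Unset Strict Implicit. Unset Printing Implicit Defensive.
Import Order.TTheory GRing.Theory Num.Theory.
Local Open Scope classical_set_scope.
Local Open Scope ring_scope.

Section Defs.
Context {R : realType} {X : metricType R}.

Definition complete_space : Prop :=
  forall F : set_system X, ProperFilter F -> cauchy F -> exists x : X, F --> x.

Definition mbounded (D : set X) : Prop :=
  exists (x0 : X) (r : R), forall y, D y -> mdist x0 y <= r.

Definition hdist (A B : set X) : \bar R :=
  ereal_sup [set ereal_inf [set (mdist a b)%:E | b in B] | a in A].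

(* a process: U t tau x, meaningful for t >= tau *)
Definition is_process (U : R -> R -> X -> X) : Prop :=
  (forall tau x, U tau tau x = x) /\
  (forall t s tau x, tau <= s -> s <= t -> U t s (U s tau x) = U t tau x).

Definition is_semigroup (S : R -> X -> X) : Prop :=
  (forall x, S 0 x = x) /\
  (forall t s x, 0 <= t -> 0 <= s -> S (t + s) x = S t (S s x)).

Definition pullback_invariant (U : R -> R -> X -> X) (A : R -> set X) : Prop :=
  forall t tau, tau <= t -> U t tau @` A tau = A t.

Definition pullback_attracting (U : R -> R -> X -> X) (A : R -> set X) : Prop :=
  forall D : set X, D !=set0 -> mbounded D ->
    forall t : R, hdist (U t (t - s) @` D) (A t) @[s --> +oo] --> 0%E.

Definition pullback_attracting_family (U : R -> R -> X -> X) (A : R -> set X)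
  : Prop :=
  (forall t, A t !=set0) /\ (forall t, compact (A t)) /\
  pullback_invariant U A /\ pullback_attracting U A.

Definition pullback_attractor (U : R -> R -> X -> X) (A : R -> set X) : Prop :=
  pullback_attracting_family U A /\
  (forall C : R -> set X, pullback_attracting_family U C ->
     forall t, A t `<=` C t).

Definition global_attractor (S : R -> X -> X) (Ag : set X) : Prop :=
  Ag !=set0 /\ compact Ag /\
  (forall t, 0 <= t -> S t @` Ag = Ag) /\
  (forall D : set X, D !=set0 -> mbounded D ->
     hdist (S t @` D) Ag @[t --> +oo] --> 0%E).

End Defs.

(* Main.v *)
Require Import Defs.
From HB Require Import structures.
From mathcomp Require Import all_boot all_order all_algebra.
From mathcomp Require Import all_classical all_reals all_analysis.
From mathcomp Require Import lra.
Import Order.TTheory GRing.Theory Num.Theory.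
Local Open Scope classical_set_scope.
Local Open Scope ring_scope.

Lemma ecvg0_ev (R : realType) (f : R -> \bar R) :
  f x @[x --> +oo] --> 0%E ->
  forall e : R, 0 < e -> exists M : R, forall t, M < t -> (f t <= e%:E)%E.
Proof.
move=> /fine_cvgP [Ffin /cvgrPdist_le Fc] e e0.
have : \forall t \near +oo, (f t <= e%:E)%E.
  near=> t.
  have /fineK <- : f t \is a fin_num by near: t.
  rewrite lee_fin.
  have : `|0 - fine (f t)| <= e by near: t; exact: Fc.
  rewrite sub0r normrN; apply: le_trans; exact: ler_norm.
by move=> [M [_ HM]]; exists M.
Unshelve. all: end_near.
Qed.

Lemma ev_ecvg0 (R : realType) (f : R -> \bar R) :
  (forall t, (0 <= f t)%E) ->
  (forall e : R, 0 < e -> exists M : R, forall t, M < t -> (f t <= e%:E)%E) ->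
  f x @[x --> +oo] --> 0%E.
Proof.
move=> f0 H; apply/fine_cvgP; split.
  have [M HM] := H 1 ltr01; exists M; split; first exact: num_real.
  move=> t /HM le1; rewrite fin_numElt (lt_le_trans _ (f0 t)) ?ltNy0 //.
  by rewrite (le_lt_trans le1) ?ltry.
apply/cvgrPdist_le => e e0; have [M HM] := H e e0.
exists M; split; first exact: num_real.
move=> t /HM; move: (f0 t); rewrite /comp; case: (f t) => //= r.
by rewrite !lee_fin sub0r normrN => r0 re; rewrite ger0_norm.
Qed.

Lemma aux_a (R : realType) (e a b c : R) : 0 < e -> a <= e/3 -> b < 2 * e / 3 -> c <= a + b -> c <= e.
Proof. move=> *; lra. Qed.
Lemma aux_b (R : realType) (e : R) : 0 < e -> e/3 < 2 * e/3.
Proof. move=> *; lra. Qed.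
Lemma aux_c (R : realType) (M T s t m: R) : M <= m -> 0 <= m -> m + T < s -> s = t + T -> M < t.
Proof. move=> *; lra. Qed.
Lemma aux_d (R : realType) (T s t m: R) : 0 <= m -> m + T < s -> s = t + T -> 0 <= t.
Proof. move=> *; lra. Qed.
Lemma aux_e (R : realType) (T s t: R) : 0 < T -> s = t + T -> t <= s.
Proof. move=> *; lra. Qed.

Arguments aux_a {R e a b c}. Arguments aux_b {R e}. Arguments aux_c {R M T s t m}. Arguments aux_d {R T s t m}. Arguments aux_e {R T s t}.

Theorem theorem2p2 (R : realType) (X : metricType R)
  (U : R -> R -> X -> X) (S : R -> X -> X)
  (A : R -> set X) (Ag : set X) (B : set X) :
  @complete_space R X ->
  is_process U -> pullback_attractor U A ->
  is_semigroup S -> global_attractor S Ag ->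
  mbounded B -> (forall t, 0 <= t -> A t `<=` B) ->
  (forall T : R, 0 < T ->
     ereal_sup [set (mdist (U (t + T) t x) (S T x))%:E | x in B]
       @[t --> +oo] --> 0%E) ->
  hdist (A t) Ag @[t --> +oo] --> 0%E.
Proof.
move=> _ _ [[A0 [_ [Ainv _]]] _] _ [Ag0 [_ [_ Gatt]]] Bb AB HUS.
apply: ev_ecvg0.
  move=> t; rewrite /hdist; have [a Aa] := A0 t.
  apply: (@le_trans _ _ (ereal_inf [set (mdist a b)%:E | b in Ag])).
    by apply: le_ereal_inf_tmp => _ [b _ <-]; rewrite lee_fin mdist_ge0.
  by apply: ereal_sup_ubound; exists a.
move=> e e0.
have Bne : B !=set0.
  by have [a Aa] := A0 0; exists a; exact: (AB 0 (lexx 0) a Aa).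
have e30 : 0 < e / 3 by rewrite divr_gt0.
have [M1 HM1] := ecvg0_ev _ _ (Gatt B Bne Bb) _ e30.
pose T := `|M1| + 1.
have T0 : 0 < T by rewrite /T ltr_pwDr.
have M1T : M1 < T by rewrite /T (le_lt_trans (ler_norm M1)) // ltrDl.
have [M2 HM2] := ecvg0_ev _ _ (HUS T T0) _ e30.
exists (Num.max M2 0 + T) => s Hs.
have [t st] : exists t : R, s = t + T by exists (s - T); rewrite subrK.
have hm1 : M2 <= Num.max M2 0 by rewrite le_max lexx.
have hm2 : 0 <= Num.max M2 0 by rewrite le_max lexx orbT.
have tM2 : M2 < t := aux_c hm1 hm2 Hs st.
have t0 : 0 <= t := aux_d hm2 Hs st.
rewrite /hdist; apply: ge_ereal_sup => _ [a Aa <-].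
rewrite -(Ainv s t (aux_e T0 st)) in Aa.
case: Aa => x Ax <-.
have xB := AB t t0 x Ax.
have h1 : mdist (U s t x) (S T x) <= e / 3.
  rewrite -lee_fin; apply: le_trans (HM2 t tM2).
  by apply: ereal_sup_ubound; exists x => //; rewrite st.
have h2 : (ereal_inf [set (mdist (S T x) b)%:E | b in Ag] <= (e/3)%:E)%E.
  apply: le_trans (HM1 T M1T).
  by apply: ereal_sup_ubound; exists (S T x) => //; exists x.
have lt23 : ((e/3)%:E < (2 * e/3)%:E)%E by rewrite lte_fin; exact: aux_b.
have [_ [b Agb <-]] := ereal_inf_lt (le_lt_trans h2 lt23).
rewrite lte_fin => hb.
  apply: (@le_trans _ _ (mdist (U s t x) b)%:E).
    by apply: ereal_inf_lbound; exists b.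
  rewrite lee_fin; exact: (aux_a e0 h1 hb (metric_triangle _ (S T x) _)).
Qed.
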